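(* Let $q_1=(1,1,1)$, $q_2=(-1,-1,1)$, $q_3=(-1,1,-1)$, $q_4=(1,-1,-1)$, let $t\in(0,1)$ and $q_{j+4}=tq_j$ ($j=1,\dots,4$). Place nonzero mass $\mu_1$ at each vertex $q_1,\dots,q_4$ of the outer tetrahedron and nonzero mass $\mu_2$ at each vertex $q_5,\dots,q_8$ of the inner tetrahedron. There exists $\delta\in(0,1)$ such that: if $t\in(0,\delta)$ and the configuration is central, then $\mu_1$ and $\mu_2$ have the same sign; if $t\in(\delta,1)$ and the configuration is central, then $\mu_1$ and $\mu_2$ have opposite signs.
   Context: A configuration $q=(q_1,\dots,q_N)$ of distinct points in $\mathbb{R}^3$ with masses $m_1,\dots,m_N$ is a central configuration if there exists $c\in\mathbb{R}$ such that $\sum_{j\neq i} m_j\left(\frac{1}{|q_j-q_i|^3}-c\right)(q_j-q_i)=0$ for all $i=1,\dots,N$. *)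

(* Defs.v *)
From HB Require Import structures.
From mathcomp Require Import all_boot all_order all_algebra.
From mathcomp Require Import reals.
Set Implicit Arguments. Unset Strict Implicit. Unset Printing Implicit Defensive.
Import Order.TTheory GRing.Theory Num.Theory.
Local Open Scope ring_scope.

Definition enorm (R : realType) (v : 'rV[R]_3) : R :=
  Num.sqrt (\sum_(k < 3) v 0 k ^+ 2).

Definition central_configuration (R : realType) (N : nat)
    (q : 'I_N -> 'rV[R]_3) (m : 'I_N -> R) : Prop :=
  injective q /\
  exists c : R, forall i : 'I_N,
    \sum_(j < N | j != i) (m j * ((enorm (q j - q i)) ^- 3 - c)) *: (q j - q i) = 0.

Definition pt3 (R : realType) (a b c : R) : 'rV[R]_3 :=
  \row_(k < 3) ([:: a; b; c]`_k).

(* q_1 = (1,1,1), q_2 = (-1,-1,1), q_3 = (-1,1,-1), q_4 = (1,-1,-1),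
   indexed by 0,1,2,3. *)
Definition tetra (R : realType) (j : nat) : 'rV[R]_3 :=
  match j with
  | 0 => pt3 1 1 1
  | 1 => pt3 (-1) (-1) 1
  | 2 => pt3 (-1) 1 (-1)
  | _ => pt3 1 (-1) (-1)
  end.

(* Index i : 'I_8 stands for q_{i+1}: q_5..q_8 = t q_1..t q_4. *)
Definition nested_config (R : realType) (t : R) (i : 'I_8) : 'rV[R]_3 :=
  if (i < 4)%N then tetra R i else t *: tetra R (i - 4)%N.

Definition nested_masses (R : realType) (mu1 mu2 : R) (i : 'I_8) : R :=
  if (i < 4)%N then mu1 else mu2.

(* Main.v *)
Require Import Defs.
From HB Require Import structures.
From mathcomp Require Import all_boot all_order all_algebra.
From mathcomp Require Import reals ring lra classical_sets.
Import Order.TTheory GRing.Theory Num.Theory.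
Local Open Scope ring_scope.

Section S.
Variable R : realType.
Lemma pt3B (a b c a' b' c' : R) : pt3 a b c - pt3 a' b' c' = pt3 (a-a') (b-b') (c-c').
Proof. by apply/rowP => k; rewrite !mxE; case: k => [[|[|[|]]]] //. Qed.
Lemma pt3Z (t a b c : R) : t *: pt3 a b c = pt3 (t*a) (t*b) (t*c).
Proof. by apply/rowP => k; rewrite !mxE; case: k => [[|[|[|]]]] //. Qed.
Lemma enorm_pt3 (a b c : R) : enorm (pt3 a b c) = Num.sqrt (a^+2 + b^+2 + c^+2).
Proof. by rewrite /enorm !big_ord_recr big_ord0 /= !mxE /= add0r. Qed.

Definition S8 : R := Num.sqrt 8.
Definition SB (t : R) : R := Num.sqrt (3 * (1 - t)^+2).
Definition SP (t : R) : R := Num.sqrt (3 + 2 * t + 3 * t^+2).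
Definition ST (t : R) : R := Num.sqrt (8 * t^+2).

Ltac canon t := repeat match goal with |- context [Num.sqrt ?x] =>
  first [ rewrite (_ : Num.sqrt x = S8); last by rewrite /S8; congr Num.sqrt; ring
        | rewrite (_ : Num.sqrt x = SB t); last by rewrite /SB; congr Num.sqrt; ring
        | rewrite (_ : Num.sqrt x = SP t); last by rewrite /SP; congr Num.sqrt; ring
        | rewrite (_ : Num.sqrt x = ST t); last by rewrite /ST; congr Num.sqrt; ring ] end.

Lemma eq0 (t c mu1 mu2 : R) :
  (\sum_(j < 8 | j != ord0) (nested_masses mu1 mu2 j * ((enorm (nested_config t j - nested_config t ord0)) ^- 3 - c)) *: (nested_config t j - nested_config t ord0)) 0 0 = 0 ->
  - 4 * mu1 * (S8^-3 - c) + (t - 1) * mu2 * (SB t ^-3 - c) - (t + 3) * mu2 * (SP t ^-3 - c) = 0.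
Proof.
rewrite summxE big_mkcond !big_ord_recl big_ord0 /=.
rewrite /nested_masses /nested_config /= /tetra.
rewrite !pt3Z !pt3B !enorm_pt3 !mxE /=.
canon t. move=> <-. ring.
Qed.

Lemma eq4 (t c mu1 mu2 : R) :
  (\sum_(j < 8 | j != Ordinal (isT : (4 < 8)%N)) (nested_masses mu1 mu2 j * ((enorm (nested_config t j - nested_config t (Ordinal (isT : (4 < 8)%N)))) ^- 3 - c)) *: (nested_config t j - nested_config t (Ordinal (isT : (4 < 8)%N)))) 0 0 = 0 ->
  (1 - t) * mu1 * (SB t^-3 - c) - (1 + 3 * t) * mu1 * (SP t ^-3 - c) - 4 * t * mu2 * (ST t ^-3 - c) = 0.
Proof.
rewrite summxE big_mkcond !big_ord_recl big_ord0 /=.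
rewrite /nested_masses /nested_config /= /tetra.
rewrite !pt3Z !pt3B !enorm_pt3 !mxE /=.
canon t. move=> <-. ring.
Qed.

Lemma S8E : S8 = 2 * Num.sqrt 2.
Proof.
rewrite /S8 (_ : 8 = 2^+2 * 2); last by rewrite expr2; rewrite -!natrM.
by rewrite sqrtrM ?sqrtr_sqr ?ger0_norm // exprn_ge0.
Qed.

Lemma S8_gt0 : 0 < S8. Proof. by rewrite /S8 sqrtr_gt0. Qed.
Lemma S8_sq : S8 ^+ 2 = 8. Proof. by rewrite /S8 sqr_sqrtr. Qed.

Lemma STE (t : R) : 0 <= t -> ST t = S8 * t.
Proof.
move=> t0; rewrite /ST sqrtrM ?sqrtr_sqr ?ger0_norm //.
Qed.

Lemma SBE (t : R) : t < 1 -> SB t = Num.sqrt 3 * (1 - t).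
Proof.
move=> t1; rewrite /SB sqrtrM ?sqrtr_sqr ?ger0_norm //; lra.
Qed.

Lemma s3_gt0 : 0 < Num.sqrt (3 : R). Proof. by rewrite sqrtr_gt0. Qed.
Lemma s3_sq : Num.sqrt (3 : R) ^+ 2 = 3. Proof. by rewrite sqr_sqrtr. Qed.

Lemma SP_sq (t : R) : 0 <= t -> SP t ^+ 2 = 3 + 2 * t + 3 * t ^+ 2.
Proof. move=> t0; rewrite /SP sqr_sqrtr //; nra. Qed.
Lemma SP_gt0 (t : R) : 0 <= t -> 0 < SP t.
Proof. move=> t0; rewrite /SP sqrtr_gt0; nra. Qed.

Definition Hf (t : R) := 4 * S8 ^- 3 - t ^+ 3 * (1 - t) * SB t ^- 3 - t ^+ 3 * (t + 3) * SP t ^- 3.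
Definition Ff (t : R) := 4 * t * S8 ^- 3 + (1 - t) * SB t ^- 3 - (1 + 3 * t) * SP t ^- 3.

Lemma keyeq (t c mu1 mu2 : R) : 0 < t ->
  - 4 * mu1 * (S8^-3 - c) + (t - 1) * mu2 * (SB t ^-3 - c) - (t + 3) * mu2 * (SP t ^-3 - c) = 0 ->
  (1 - t) * mu1 * (SB t^-3 - c) - (1 + 3 * t) * mu1 * (SP t ^-3 - c) - 4 * t * mu2 * (ST t ^-3 - c) = 0 ->
  mu2 * Hf t = mu1 * t ^+ 2 * Ff t.
Proof.
move=> t0 e0 e4.
rewrite STE ?ltW // (_ : (S8 * t) ^- 3 = S8 ^- 3 * t ^- 3) in e4; last by rewrite exprMn invfM.
have hW : t ^- 3 * t ^+ 3 = 1 by rewrite mulVf // expf_neq0 // gt_eqF.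
apply/eqP; rewrite -subr_eq0; apply/eqP.
have -> : mu2 * Hf t - mu1 * t ^+ 2 * Ff t =
  t ^+ 2 * (t * (- 4 * mu1 * (S8^-3 - c) + (t - 1) * mu2 * (SB t ^-3 - c) - (t + 3) * mu2 * (SP t ^-3 - c))
   - ((1 - t) * mu1 * (SB t^-3 - c) - (1 + 3 * t) * mu1 * (SP t ^-3 - c) - 4 * t * mu2 * (S8 ^- 3 * t ^- 3 - c)))
  + 4 * mu2 * S8 ^- 3 * (1 - t ^- 3 * t ^+ 3) by rewrite /Hf /Ff; ring.
by rewrite e0 e4 hW; ring.
Qed.

Lemma poly_ineq (t : R) : 0 < t < 1 ->
  27 * ((1 + 3 * t) * (1 - t) ^+ 2) ^+ 2 <= (3 + 2 * t + 3 * t ^+ 2) ^+ 3.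
Proof.
move=> /andP [t0 t1].
have h : 0 <= 360 + 224 * t - 720 * t ^+ 2 + 864 * t ^+ 3 - 216 * t ^+ 4 by nra.
have -> : (3 + 2 * t + 3 * t ^+ 2) ^+ 3 = 27 * ((1 + 3 * t) * (1 - t) ^+ 2) ^+ 2 +
   t ^+ 2 * (360 + 224 * t - 720 * t ^+ 2 + 864 * t ^+ 3 - 216 * t ^+ 4) by ring.
rewrite lerDl; apply: mulr_ge0 => //; exact: exprn_ge0 (ltW _).
Qed.

Lemma Fpos (t : R) : 0 < t < 1 -> 0 < Ff t.
Proof.
move=> /[dup] ht /andP [t0 t1].
set s3 := Num.sqrt (3 : R).
have s3p : 0 < s3 := s3_gt0. have s3s : s3 ^+ 2 = 3 := s3_sq.
set A := (1 + 3 * t) * s3 ^+ 3 * (1 - t) ^+ 2.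
set B := SP t ^+ 3.
have spp := SP_gt0 t (ltW t0). have sps := SP_sq t (ltW t0).
have A0 : 0 <= A by rewrite /A; apply: mulr_ge0; [apply: mulr_ge0|apply: exprn_ge0]; try apply: exprn_ge0; lra.
have B0 : 0 < B by rewrite /B exprn_gt0.
have A2 : A ^+ 2 = 27 * ((1 + 3 * t) * (1 - t) ^+ 2) ^+ 2.
  transitivity (((1 + 3 * t) * (1 - t) ^+ 2) ^+ 2 * (s3 ^+ 2) ^+ 3); first by rewrite /A; ring.
  by rewrite s3s; ring.
have B2 : B ^+ 2 = (3 + 2 * t + 3 * t ^+ 2) ^+ 3.
  transitivity ((SP t ^+ 2) ^+ 3); first by rewrite /B; ring.
  by rewrite sps.
have AB : A <= B.
  have := poly_ineq t ht; rewrite -A2 -B2 => h; nra.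
set y := SB t ^- 3. set z := SP t ^- 3.
have sbp : 0 < SB t by rewrite (SBE t t1) mulr_gt0 //; lra.
have y0 : 0 < y by rewrite /y invr_gt0 exprn_gt0.
have z0 : 0 < z by rewrite /z invr_gt0 exprn_gt0.
have hy : y * SB t ^+ 3 = 1 by rewrite mulVf // gt_eqF // exprn_gt0.
have hz : z * B = 1 by rewrite mulVf // gt_eqF.
have X0 : 0 < S8 ^- 3 by rewrite invr_gt0 exprn_gt0 // S8_gt0.
have E : (1 - t) * y - (1 + 3 * t) * z = y * z * (1 - t) * (B - A).
  have -> : (1 - t) * y - (1 + 3 * t) * z = (1 - t) * y * (z * B) - (1 + 3 * t) * z * (y * SB t ^+ 3)
    by rewrite hz hy; ring.
  by rewrite /A (SBE t t1) -/s3; ring.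
have : 0 <= (1 - t) * y - (1 + 3 * t) * z.
  rewrite E; apply: mulr_ge0; last lra.
  apply: mulr_ge0; last lra. by apply: mulr_ge0; lra.
rewrite /Ff -/y -/z => h.
have : 0 < 4 * t * S8 ^- 3 by apply: mulr_gt0 => //; lra.
lra.
Qed.

Lemma pow_lt (n : nat) (x y : R) : (0 < n)%N -> 0 <= x -> x < y -> x ^+ n < y ^+ n.
Proof. by move=> n0 x0 xy; rewrite ltrXn2r // -lt0n. Qed.

Lemma Hdec (s t : R) : 0 < s -> s < t -> t < 1 -> Hf t < Hf s.
Proof.
move=> s0 st t1.
have s1 : s < 1 by lra.
have t0 : 0 < t by lra.
set s3 := Num.sqrt (3 : R).
have s3p : 0 < s3 := s3_gt0.
have T1 : forall x, 0 < x -> x < 1 -> x ^+ 3 * (1 - x) * SB x ^- 3 = s3 ^- 3 * (x ^+ 3 * ((1 - x)^-1) ^+ 2).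
  move=> x x0 x1; rewrite (SBE x x1) -/s3; field.
  by apply/andP; split; [rewrite subr_eq0 gt_eqF | rewrite gt_eqF].
have T2 : forall x, 0 < x -> x ^+ 3 * (x + 3) * SP x ^- 3 = (x + 3) * (x / SP x) ^+ 3.
  move=> x x0; have h := SP_gt0 x (ltW x0); field; by rewrite gt_eqF.
have U : (1 - s)^-1 < (1 - t)^-1 by rewrite ltf_pV2 ?posrE; lra.
have U0 : 0 < (1 - s)^-1 by rewrite invr_gt0; lra.
have V : s / SP s < t / SP t.
  have a0 := SP_gt0 s (ltW s0). have b0 := SP_gt0 t (ltW t0).
  have a2 := SP_sq s (ltW s0). have b2 := SP_sq t (ltW t0).
  have E : t / SP t - s / SP s = (t * SP s - s * SP t) / (SP s * SP t).
    by field; apply/andP; split; rewrite gt_eqF.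
  rewrite -subr_gt0 E; apply: divr_gt0; last exact: mulr_gt0.
  have h1 : 0 < (t * SP s) ^+ 2 - (s * SP t) ^+ 2.
    rewrite !exprMn a2 b2.
    have -> : t ^+ 2 * (3 + 2 * s + 3 * s ^+ 2) - s ^+ 2 * (3 + 2 * t + 3 * t ^+ 2) = (t - s) * (3 * (t + s) + 2 * t * s) by ring.
    apply: mulr_gt0; first lra. have : 0 < t * s by apply: mulr_gt0. lra.
  have h2 : 0 < t * SP s + s * SP t by apply: addr_gt0; apply: mulr_gt0.
  nra.
have V0 : 0 < s / SP s by apply: divr_gt0 => //; apply: SP_gt0; lra.
rewrite /Hf T1 // T1 // T2 // T2 //.
have i3 : 0 < s3 ^- 3 by rewrite invr_gt0 exprn_gt0.
have P1 : s ^+ 3 * (1 - s)^-1 ^+ 2 < t ^+ 3 * (1 - t)^-1 ^+ 2.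
  apply: ltr_pM; [exact: exprn_ge0 (ltW _)|exact: exprn_ge0 (ltW _)|exact: pow_lt (ltW _) _|exact: pow_lt (ltW _) _].
have P2 : (s + 3) * (s / SP s) ^+ 3 < (t + 3) * (t / SP t) ^+ 3.
  apply: ltr_pM; [lra|exact: exprn_ge0 (ltW _)|lra|exact: pow_lt (ltW _) _].
have : s3 ^- 3 * (s ^+ 3 * (1 - s)^-1 ^+ 2) < s3 ^- 3 * (t ^+ 3 * (1 - t)^-1 ^+ 2) by rewrite ltr_pM2l.
lra.
Qed.

Lemma SB_sq (t : R) : SB t ^+ 2 = 3 * (1 - t) ^+ 2.
Proof. by rewrite /SB sqr_sqrtr // mulr_ge0 // sqr_ge0. Qed.
Lemma SB_gt0 (t : R) : t < 1 -> 0 < SB t.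
Proof. move=> t1; rewrite /SB sqrtr_gt0 mulr_gt0 // exprn_gt0 //; lra. Qed.

Lemma X_lb : 100 / 2272 <= S8 ^- 3.
Proof.
have a0 := S8_gt0. have a2 := S8_sq.
have aub : S8 <= 284 / 100 by nra.
have a3 : S8 ^+ 3 = 8 * S8 by rewrite -a2; ring.
have x1 : S8 ^- 3 * (8 * S8) = 1 by rewrite -a3 mulVf // gt_eqF // exprn_gt0.
have x0 : 0 < S8 ^- 3 by rewrite invr_gt0 exprn_gt0.
nra.
Qed.

Lemma X_ub : S8 ^- 3 <= 1 / 16.
Proof.
have a0 := S8_gt0. have a2 := S8_sq.
have alb : 2 <= S8 by nra.
have a3 : S8 ^+ 3 = 8 * S8 by rewrite -a2; ring.
have x1 : S8 ^- 3 * (8 * S8) = 1 by rewrite -a3 mulVf // gt_eqF // exprn_gt0.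
have x0 : 0 < S8 ^- 3 by rewrite invr_gt0 exprn_gt0.
nra.
Qed.

Lemma Hhalf : 0 < Hf (1 / 2).
Proof.
have hX := X_lb.
have b0 : 0 < SB (1/2) by apply: SB_gt0; lra.
have b2 : SB (1/2) ^+ 2 = 3 / 4 by rewrite SB_sq; field.
have blb : 85 / 100 <= SB (1/2) by nra.
have b3 : SB (1/2) ^+ 3 = 3 / 4 * SB (1/2) by rewrite -b2; ring.
have y1 : SB (1/2) ^- 3 * (3 / 4 * SB (1/2)) = 1 by rewrite -b3 mulVf // gt_eqF // exprn_gt0.
have y0 : 0 < SB (1/2) ^- 3 by rewrite invr_gt0 exprn_gt0.
have yub : SB (1/2) ^- 3 <= 10000 / 6375 by nra.
have c0 : 0 < SP (1/2) by apply: SP_gt0; lra.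
have c2 : SP (1/2) ^+ 2 = 19 / 4 by rewrite SP_sq; [field| lra].
have clb : 21 / 10 <= SP (1/2) by nra.
have c3 : SP (1/2) ^+ 3 = 19 / 4 * SP (1/2) by rewrite -c2; ring.
have z1 : SP (1/2) ^- 3 * (19 / 4 * SP (1/2)) = 1 by rewrite -c3 mulVf // gt_eqF // exprn_gt0.
have z0 : 0 < SP (1/2) ^- 3 by rewrite invr_gt0 exprn_gt0.
have zub : SP (1/2) ^- 3 <= 1000 / 9975 by nra.
have -> : Hf (1/2) = 4 * S8 ^- 3 - SB (1/2) ^- 3 / 16 - 7 / 16 * SP (1/2) ^- 3.
  rewrite /Hf. set u := SB _ ^- 3. set v := SP _ ^- 3. field. by rewrite gt_eqF // S8_gt0.
lra.
Qed.

Lemma H910 : Hf (9 / 10) < 0.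
Proof.
have hX := X_ub.
have b0 : 0 < SB (9/10) by apply: SB_gt0; lra.
have b2 : SB (9/10) ^+ 2 = 3 / 100 by rewrite SB_sq; field.
have bub : SB (9/10) <= 2 / 10 by nra.
have b3 : SB (9/10) ^+ 3 = 3 / 100 * SB (9/10) by rewrite -b2; ring.
have y1 : SB (9/10) ^- 3 * (3 / 100 * SB (9/10)) = 1 by rewrite -b3 mulVf // gt_eqF // exprn_gt0.
have y0 : 0 < SB (9/10) ^- 3 by rewrite invr_gt0 exprn_gt0.
have ylb : 1000 / 6 <= SB (9/10) ^- 3 by nra.
have c0 : 0 < SP (9/10) by apply: SP_gt0; lra.
have z0 : 0 < SP (9/10) ^- 3 by rewrite invr_gt0 exprn_gt0.
have -> : Hf (9/10) = 4 * S8 ^- 3 - 729 / 10000 * SB (9/10) ^- 3 - 729 / 1000 * (39 / 10) * SP (9/10) ^- 3.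
  rewrite /Hf. set u := SB _ ^- 3. set v := SP _ ^- 3. field. by rewrite gt_eqF // S8_gt0.
have : 0 < 729 / 1000 * (39 / 10) * SP (9/10) ^- 3 :> R.
  by apply: mulr_gt0 => //; apply: mulr_gt0; apply: divr_gt0.
lra.
Qed.

Lemma cc_key (t mu1 mu2 : R) : 0 < t < 1 ->
  central_configuration (nested_config t) (nested_masses mu1 mu2) ->
  mu2 * Hf t = mu1 * t ^+ 2 * Ff t.
Proof.
move=> /andP [t0 t1] [_ [c H]].
apply: (keyeq t c) => //.
  apply: eq0; move: (H ord0) => /(congr1 (fun w : 'rV[R]_3 => w 0 0)); by rewrite mxE.
apply: eq4; move: (H (Ordinal (isT : (4 < 8)%N))) => /(congr1 (fun w : 'rV[R]_3 => w 0 0)); by rewrite mxE.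
Qed.
End S.

Theorem theorem6 (R : realType) :
  exists delta : R, 0 < delta < 1 /\
    (forall t mu1 mu2 : R, mu1 != 0 -> mu2 != 0 ->
       0 < t < delta ->
       central_configuration (nested_config t) (nested_masses mu1 mu2) ->
       0 < mu1 * mu2) /\
    (forall t mu1 mu2 : R, mu1 != 0 -> mu2 != 0 ->
       delta < t < 1 ->
       central_configuration (nested_config t) (nested_masses mu1 mu2) ->
       mu1 * mu2 < 0).
Proof.
pose E := fun t : R => 0 < t < 1 /\ 0 < Hf R t.
have Ehalf : E (1/2) by split; [apply/andP; split; lra | exact: Hhalf].
have bnd : forall s, E s -> s < 9/10.
  move=> s [/andP [s0 s1] hs]; rewrite ltNge; apply/negP => hle.
  have h9 := @H910 R.
  move: hle; rewrite le_eqVlt => /orP [/eqP e|lt].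
    by move: hs; rewrite -e; lra.
  have := @Hdec R (9/10) s ltac:(lra) lt s1; lra.
have hsup : has_sup E.
  split; first by exists (1/2).
  by exists 1 => y [/andP [_ /ltW]].
exists (sup E).
have d1 : 1/2 <= sup E := sup_upper_bound hsup Ehalf.
have d2 : sup E <= 9/10 by apply: ge_sup; [exists (1/2) | move=> y Ey; exact: ltW (bnd y Ey)].
split; first by apply/andP; split; lra.
have sgn : forall t mu1 mu2 : R, mu2 != 0 -> 0 < t < 1 ->
    central_configuration (nested_config t) (nested_masses mu1 mu2) ->
    mu2 ^+ 2 * Hf R t = (mu1 * mu2) * (t ^+ 2 * Ff R t) /\ 0 < mu2 ^+ 2 /\ 0 < t ^+ 2 * Ff R t.
  move=> t mu1 mu2 m2 ht cc; have K := @cc_key R t mu1 mu2 ht cc.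
  split; first by rewrite expr2 -mulrA K; ring.
  split; first by rewrite exprn_even_gt0 // m2 orbT.
  case/andP: ht => t0 t1.
  by apply: mulr_gt0; [rewrite exprn_gt0 | apply: Fpos; apply/andP].
split.
  move=> t mu1 mu2 _ m2 /andP [t0 td] cc.
  have t1 : t < 1 by lra.
  have [K [P Q]] := sgn t mu1 mu2 m2 ltac:(apply/andP; split; lra) cc.
  have [e Ee lte] := @sup_adherent R E (sup E - t) ltac:(lra) hsup.
  have hte : t < e by lra.
  case: Ee => /andP [e0 e1] he.
  have := @Hdec R t e t0 hte e1 => hd.
  have : 0 < mu2 ^+ 2 * Hf R t by apply: mulr_gt0 => //; lra.
  by rewrite K pmulr_lgt0.
move=> t mu1 mu2 _ m2 /andP [dt t1] cc.
have t0 : 0 < t by lra.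
have [K [P Q]] := sgn t mu1 mu2 m2 ltac:(apply/andP; split; lra) cc.
have hneg : Hf R t < 0.
  rewrite ltNge; apply/negP => hge.
  have t'E : E ((sup E + t) / 2).
    split; first by apply/andP; split; lra.
    have := @Hdec R ((sup E + t) / 2) t ltac:(lra) ltac:(lra) t1; lra.
  have := sup_upper_bound hsup t'E; lra.
have : mu2 ^+ 2 * Hf R t < 0 by rewrite pmulr_rlt0.
by rewrite K pmulr_llt0.
Qed.
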